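(* Let $X$ be a finite-dimensional normed space and let $(A_n)_{n\in\mathbb N}$ be a nested (i.e. $A_{n+1}\subset A_n$) sequence of unbounded connected subsets of $X$. Then either $\bigcap_{n\in\mathbb N}A_n=\emptyset$, or $\bigcap_{n\in\mathbb N}A_n^\varepsilon$ is unbounded for every $\varepsilon>0$.
   Context: For a set $A\subset X$ and $\varepsilon>0$, $A^\varepsilon=\{x\in X:\mathrm{dist}(x,A)\le\varepsilon\}$. *)

(* Defs.v *)
From HB Require Import structures.
From mathcomp Require Import all_boot all_order all_algebra.
From mathcomp Require Import all_classical all_reals all_analysis.
Set Implicit Arguments. Unset Strict Implicit. Unset Printing Implicit Defensive.
Import Order.TTheory GRing.Theory Num.Theory.
Import numFieldNormedType.Exports.
Local Open Scope classical_set_scope.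
Local Open Scope ring_scope.

Definition finite_dim (R : realType) (X : normedModType R) : Prop :=
  exists (n : nat) (e : 'I_n -> X),
    forall x : X, exists c : 'I_n -> R, x = \sum_(i < n) c i *: e i.

Definition dist_set (R : realType) (X : normedModType R) (x : X) (A : set X) : R :=
  inf [set `|x - a| | a in A].

Definition fattening (R : realType) (X : normedModType R) (A : set X) (eps : R) : set X :=
  [set x | dist_set x A <= eps].

(* Main.v *)
From HB Require Import structures.
From mathcomp Require Import all_boot all_order all_algebra.
From mathcomp Require Import all_classical all_reals all_analysis.
Import Order.TTheory GRing.Theory Num.Theory.
Import numFieldNormedType.Exports.
Local Open Scope classical_set_scope.
Local Open Scope ring_scope.
From mathcomp Require Import lra.
Require Import Defs.
Set Implicit Arguments. Unset Strict Implicit.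

Section H.
Variables (R : realType) (X : normedModType R).

Lemma coord_le n (c : 'rV[R]_n) i : `|c ord0 i| <= `|c|.
Proof.
have /mapP[j Hj ->] : `|c ord0 i| \in [seq `|c x.1 x.2| | x : 'I_1 * 'I_n].
  by apply/mapP; exists (ord0, i) => //=; rewrite mem_enum.
by rewrite [leRHS]/Num.Def.normr /= mx_normrE; apply/bigmax_geP; right => /=; exists j.
Qed.

Definition Lmap n (e : 'I_n -> X) (c : 'rV[R]_n) : X := \sum_(i < n) c ord0 i *: e i.

Lemma LmapB n (e : 'I_n -> X) c d : Lmap e (c - d) = Lmap e c - Lmap e d.
Proof.
rewrite /Lmap -sumrB; apply: eq_bigr => i _; by rewrite !mxE scalerBl.
Qed.

Lemma LmapZ n (e : 'I_n -> X) a c : Lmap e (a *: c) = a *: Lmap e c.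
Proof.
rewrite /Lmap scaler_sumr; apply: eq_bigr => i _; by rewrite !mxE scalerA.
Qed.

Lemma Lmap_lip n (e : 'I_n -> X) c : `|Lmap e c| <= `|c| * \sum_(i < n) `|e i|.
Proof.
rewrite mulr_sumr; apply: le_trans (ler_norm_sum _ _ _) _.
apply: ler_sum => i _; rewrite normrZ ler_wpM2r //; exact: coord_le.
Qed.

Lemma Lmap_norm_cont n (e : 'I_n -> X) : continuous (fun c : 'rV[R]_n => `|Lmap e c|).
Proof.
move=> x; apply/(@cvgrPdist_lt _ _ _ _ (nbhs_filter x)) => eps e0.
set K := \sum_(i < n) `|e i|.
have K0 : 0 < K + 1 by rewrite ltr_pwDr // sumr_ge0.
apply/nbhs_ballP; exists (eps / (K + 1)); first by rewrite /= divr_gt0.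
move=> t; rewrite -ball_normE /ball_ /= => Ht.
apply: le_lt_trans (ler_dist_dist _ _) _.
rewrite -LmapB; apply: le_lt_trans (Lmap_lip _ _) _.
have : `|x - t| * K <= `|x - t| * (K + 1) by rewrite ler_wpM2l // lerDl.
move/le_lt_trans; apply.
by rewrite -ltr_pdivlMr.
Qed.

Definition spans n (e : 'I_n -> X) :=
  forall x : X, exists c : 'I_n -> R, x = \sum_(i < n) c i *: e i.

Lemma reduce n (e : 'I_n -> X) : spans e ->
  exists m (e' : 'I_m -> X), spans e' /\ (forall c, Lmap e' c = 0 -> c = 0).
Proof.
elim: n e => [e he|n IH e he].
  by exists 0%N, e; split => // c _; apply/rowP => -[].
have [inj|ninj] := pselect (forall c, Lmap e c = 0 -> c = 0).
  by exists n.+1, e.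
have [c [Lc0 cn0]] : exists c, Lmap e c = 0 /\ c <> 0.
  apply: contra_notP ninj => H c Lc; apply: contra_notP H => cn0; by exists c.
have [j cj] : exists j, c ord0 j != 0.
  apply: contra_notP cn0 => H; apply/rowP => j; rewrite mxE.
  case: (pselect (c 0 j = 0)) => // h; exfalso; apply: H; exists j; exact/eqP.
apply: (IH (fun i => e (lift j i))) => x.
have [d ->] := he x.
exists (fun k => d (lift j k) - d j / c ord0 j * c ord0 (lift j k)).
have -> : \sum_(i < n.+1) d i *: e i =
  \sum_(i < n.+1) (d i - d j / c ord0 j * c ord0 i) *: e i.
  rewrite [RHS](eq_bigr (fun i => d i *: e i - (d j / c ord0 j) *: (c ord0 i *: e i))); last first.
    by move=> i _; rewrite scalerBl scalerA.
  by rewrite sumrB -scaler_sumr -/(Lmap e c) Lc0 scaler0 subr0.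
rewrite (bigD1_ord j) //= divfK // subrr scale0r add0r //.
Qed.

Lemma lower n (e : 'I_n -> X) : (forall c, Lmap e c = 0 -> c = 0) ->
  exists2 m, 0 < m & forall c, m * `|c| <= `|Lmap e c|.
Proof.
move=> inj.
pose S := [set c : 'rV[R]_n | `|c| = 1].
have unit c : c != 0 -> S (`|c|^-1 *: c).
  move=> cn0; rewrite /S /= normrZ normfV normr_id mulVf //.
  by rewrite normr_eq0.
have [[c0 Sc0]|S0] := pselect (S !=set0); last first.
  exists 1 => // c; have [->|cn0] := eqVneq c 0; first by rewrite normr0 mulr0.
  by exfalso; apply: S0; exists (`|c|^-1 *: c); exact: unit.
have cS : compact S.
  apply: bounded_closed_compact.
    exists 1; split; first exact: num_real.
    by move=> M M1 x Sx; rewrite /= Sx ltW.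
  have -> : S = (fun c : 'rV[R]_n => `|c|) @^-1` [set x | x = 1] by [].
  apply: preimage_closed; last exact: closed_eq.
  by move=> x _; exact: norm_continuous.
have [cm cmS cmin] := EVT_min_rV (f := fun c => `|Lmap e c|) (ex_intro _ c0 Sc0) cS
  (continuous_subspaceT (@Lmap_norm_cont n e)).
exists `|Lmap e cm|.
  rewrite normr_gt0; apply/eqP => /inj cm0.
  by move: cmS; rewrite inE /S /= cm0 normr0 => /esym/eqP; rewrite oner_eq0.
move=> c; have [->|cn0] := eqVneq c 0; first by rewrite normr0 mulr0.
have := cmin _ (mem_set (unit c cn0)).
rewrite LmapZ normrZ normfV normr_id -ler_pdivlMr ?normr_gt0 //.
by rewrite mulrC.
Qed.

Lemma Lmap_close n (e : 'I_n -> X) eps c d : 0 < eps ->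
  `|c - d| < eps / (\sum_(i < n) `|e i| + 1) -> `|Lmap e c - Lmap e d| < eps.
Proof.
move=> e0 Ht; set K := \sum_(i < n) `|e i|.
have K0 : 0 < K + 1 by rewrite ltr_pwDr // sumr_ge0.
rewrite -LmapB; apply: le_lt_trans (Lmap_lip _ _) _.
have : `|c - d| * K <= `|c - d| * (K + 1) by rewrite ler_wpM2l // lerDl.
move/le_lt_trans; apply.
by rewrite -ltr_pdivlMr.
Qed.

End H.

Theorem mainTheorem7 (R : realType) (X : normedModType R) (A : nat -> set X) :
  finite_dim X ->
  (forall n, A n.+1 `<=` A n) ->
  (forall n, ~ bounded_set (A n)) ->
  (forall n, connected (A n)) ->
  \bigcap_n A n = set0 \/
  (forall eps : R, 0 < eps -> ~ bounded_set (\bigcap_n fattening (A n) eps)).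
Proof.
move=> [n0 [e0 he0]] nest unb conn.
have [n [e [he inj]]] := reduce he0.
have [m m0 hm] := lower inj.
have nestk : forall k j, (k <= j)%N -> A j `<=` A k.
  move=> k j /subnK <-; elim: (j - k)%N => [|i IH] //= x.
  by rewrite addSn => /nest /IH.
case: (pselect (\bigcap_k A k = set0)) => [->|ne]; [by left|right].
have /set0P [x0 hx0] : \bigcap_k A k != set0 by apply/eqP.
move=> eps eps0 [M [_ HM]].
have HB : forall y, (\bigcap_k fattening (A k) eps) y -> `|y| <= M + 1.
  by move=> y; apply: HM; rewrite ltrDl.
pose r := `|M| + 1 + `|x0| + eps + 1.
have hsph : forall k, exists a, A k a /\ `|a - x0| = r.
  move=> k.
  have [b [Akb bbig]] : exists b, A k b /\ r < `|b - x0|.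
    case: (pselect (exists b, A k b /\ r < `|b - x0|)) => // H; exfalso; apply: (unb k).
    exists (r + `|x0|); split; first exact: num_real.
    move=> M' HM' b Akb /=.
    have : `|b - x0| <= r by rewrite leNgt; apply/negP => hb; apply: H; exists b.
    have := ler_normD (b - x0) x0; rewrite subrK => h1 h2.
    by apply: le_trans h1 _; apply: ltW; apply: le_lt_trans HM'; rewrite lerD2r.
  have gc : continuous (fun a : X => `|a - x0|).
    move=> z; apply: (continuous_comp (f := fun a => a - x0) (g := Num.Def.normr)).
      by apply: cvgB; [exact: cvg_id | exact: cvg_cst].
    exact: norm_continuous.
  have ci := connected_continuous_connected (conn k) (continuous_subspaceT gc).
  move/connected_intervalP: ci => ii.
  have := ii 0 `|b - x0| _ _ r.
  case.
  - by exists x0 => //; [exact: hx0 | rewrite subrr normr0].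
  - by exists b.
  - apply/andP; split; last exact: ltW.
    by have := normr_ge0 M; have := normr_ge0 x0; rewrite /r; lra.
  by move=> a Aa har; exists a.
have [a ha] := choice hsph.
have [cf hcf] := choice (fun k => he (a k)).
pose v k := \row_i cf k i : 'rV[R]_n.
have av : forall k, a k = Lmap e (v k).
  by move=> k; rewrite hcf /Lmap; apply: eq_bigr => i _; rewrite mxE.
pose Rb := (r + `|x0|) / m.
have vb : forall k, `|v k| <= Rb.
  move=> k; rewrite /Rb ler_pdivlMr // mulrC.
  apply: le_trans (hm (v k)) _; rewrite -av.
  have := ler_normD (a k - x0) x0; rewrite subrK (ha k).2 //.
pose C := [set w : 'rV[R]_n | `|w| <= Rb].
have cC : compact C.
  apply: bounded_closed_compact.
    exists Rb; split; first exact: num_real.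
    by move=> M' HM' x Cx; rewrite /=; apply: le_trans (ltW HM').
  have -> : C = (fun c : 'rV[R]_n => `|c|) @^-1` [set x | x <= Rb] by [].
  apply: preimage_closed; last exact: closed_le.
  by move=> x _; exact: norm_continuous.
have [w [Cw clw]] : C `&` cluster (v @ \oo) !=set0.
  have FC : (v @ \oo) C by exists 0%N => // k _; exact: vb.
  exact: cC FC.
pose y := Lmap e w.
have key : forall k, exists j, (k <= j)%N /\ `|y - a j| < eps.
  move=> k.
  set K := \sum_(i < n) `|e i|.
  have K0 : 0 < K + 1 by rewrite ltr_pwDr // sumr_ge0.
  have [z [[j kj <-] bz]] :
      [set v j | j in [set j | (k <= j)%N]] `&` ball w (eps / (K + 1)) !=set0.
    apply: clw.
      by exists k => // j kj; exists j.
    by apply: nbhsx_ballx; rewrite divr_gt0.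
  exists j; split => //.
  rewrite av; apply: Lmap_close => //.
  by move: bz; rewrite -ball_normE /ball_.
have yin : (\bigcap_k fattening (A k) eps) y.
  move=> k _; rewrite /fattening /=.
  have [j [kj hj]] := key k.
  apply: le_trans (ltW hj); rewrite /dist_set; apply: ge_inf.
    by exists 0 => z [a' _ <-]; exact: normr_ge0.
  by exists (a j) => //; exact: nestk kj _ (ha j).1.
have := HB y yin.
have [j [_ hj]] := key 0%N.
have t1 := ler_distD y (a j) x0.
have t2 := ler_normB y x0.
have t3 : `|a j - y| = `|y - a j| by rewrite distrC.
have t4 := (ha j).2.
have t5 := ler_norm M.
rewrite /r in t4.
lra.
Qed.
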